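(* Let $G$ be a locally compact group with left Haar measure $m$. Then either $I(G)=1$ or $I(G)=\infty$.
   Context: $I(G)=\sup_{K\in \mathcal K}\inf_{A\in \mathcal K_p} m(KA)/m(A)$, where $\mathcal K$ is the collection of nonempty compact subsets of $G$, $\mathcal K_p$ the collection of compact subsets of positive left Haar measure, and $KA=\{ka:k\in K,a\in A\}$. *)

(* Defs.v *)
From HB Require Import structures.
From mathcomp Require Import all_boot all_order all_algebra.
From mathcomp Require Import all_classical all_reals all_analysis.
Set Implicit Arguments. Unset Strict Implicit. Unset Printing Implicit Defensive.
Import Order.TTheory GRing.Theory Num.Theory.
Local Open Scope classical_set_scope.
Local Open Scope ring_scope.

(* The Borel sigma-algebra of a topological space, as a measurable type
   whose carrier is (convertibly) the carrier of the space. *)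
Definition borelT (G : ptopologicalType) := g_sigma_algebraType (@open G).

Definition lc_group (G : ptopologicalType) (mul : G -> G -> G) (inv : G -> G)
    (one : G) : Prop :=
  [/\ (forall x y z, mul x (mul y z) = mul (mul x y) z),
      (forall x, mul one x = x /\ mul x one = x),
      (forall x, mul (inv x) x = one /\ mul x (inv x) = one),
      (continuous (fun p : G * G => mul p.1 p.2) /\ continuous inv) &
      (hausdorff_space G /\ locally_compact [set: G])].

Definition setmul (G : Type) (mul : G -> G -> G) (K A : set G) : set G :=
  [set mul k a | k in K & a in A].

Definition left_haar (R : realType) (G : ptopologicalType) (mul : G -> G -> G)
    (m : {measure set (borelT G) -> \bar R}) : Prop :=
  [/\ (forall (g : G) (A : set G), measurable (A : set (borelT G)) ->
          m (mul g @` A) = m A),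
      (forall K : set G, compact K -> (m K < +oo)%E),
      (forall A : set G, measurable (A : set (borelT G)) ->
          m A = ereal_inf [set m U | U in [set U : set G | open U /\ A `<=` U]]),
      (forall U : set G, open U ->
          m U = ereal_sup [set m K | K in [set K : set G | compact K /\ K `<=` U]]) &
      m [set: G] != 0%E].

Definition Iconst (R : realType) (G : ptopologicalType) (mul : G -> G -> G)
    (m : {measure set (borelT G) -> \bar R}) : \bar R :=
  ereal_sup [set ereal_inf
                 [set (m (setmul mul K A) * ((fine (m A))^-1)%:E)%E
                   | A in [set A : set G | compact A /\ (0 < m A)%E]]
            | K in [set K : set G | compact K /\ K !=set0]].

(* Main.v *)
Require Import Defs.
From HB Require Import structures.
From mathcomp Require Import all_boot all_order all_algebra.
From mathcomp Require Import all_classical all_reals all_analysis.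
From mathcomp Require Import ring lra.
Set Implicit Arguments. Unset Strict Implicit.
Import Order.TTheory GRing.Theory Num.Theory.
Local Open Scope classical_set_scope.
Local Open Scope ring_scope.

Lemma compact_meas (G : ptopologicalType) (A : set G) :
  hausdorff_space G -> compact A -> measurable (A : set (borelT G)).
Proof.
move=> hG cA; have cl := compact_closed hG cA.
have o : open (~` A) by rewrite openC.
have : measurable (~` A : set (borelT G)) by apply: sub_gen_smallest.
by move/measurableC; rewrite setCK.
Qed.

Lemma setmul_compact (G : ptopologicalType) (mul : G -> G -> G) (K A : set G) :
  continuous (fun p : G * G => mul p.1 p.2) -> compact K -> compact A ->
  compact (setmul mul K A).
Proof.
move=> cm cK cA.
have -> : setmul mul K A = (fun p : G * G => mul p.1 p.2) @` (K `*` A).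
  apply/seteqP; split => x.
  - by case=> k Kk [a Aa <-]; exists (k, a).
  - by case=> -[k a] [/= Kk Aa] <-; exists k => //; exists a.
apply: continuous_compact => //; first exact: continuous_subspaceT.
exact: compact_setX.
Qed.

Section Main.
Variables (R : realType) (G : ptopologicalType)
    (mul : G -> G -> G) (inv : G -> G) (one : G)
    (m : {measure set (borelT G) -> \bar R}).
Hypothesis hG : lc_group mul inv one.
Hypothesis hm : left_haar mul m.

Let F K := ereal_inf [set (m (setmul mul K A) * ((fine (m A))^-1)%:E)%E
                   | A in [set A : set G | compact A /\ (0 < m A)%E]].

Let haus : hausdorff_space G. Proof. by case: hG => _ _ _ _ []. Qed.
Let cmul : continuous (fun p : G * G => mul p.1 p.2). Proof. by case: hG => _ _ _ []. Qed.

Lemma setmulA K1 K2 A : setmul mul (setmul mul K1 K2) A = setmul mul K1 (setmul mul K2 A).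
Proof.
case: hG => mA _ _ _ _.
apply/seteqP; split => x.
- by case=> _ [k1 K1k [k2 K2k <-]] [a Aa <-]; exists k1 => //; exists (mul k2 a); [exists k2 => //; exists a|rewrite mA].
- by case=> k1 K1k [_ [k2 K2k [a Aa <-]] <-]; exists (mul k1 k2); [exists k1 => //; exists k2|exists a => //; rewrite mA].
Qed.

Lemma fin_compact K : compact K -> m K \is a fin_num.
Proof.
move=> cK; case: hm => _ hfin _ _ _.
rewrite ge0_fin_numE ?measure_ge0 //; exact: hfin.
Qed.

Lemma F_ge0 K : (0 <= F K)%E.
Proof.
apply: le_ereal_inf_tmp => _ [A _ <-].
apply: mule_ge0; first exact: measure_ge0.
by rewrite lee_fin invr_ge0 fine_ge0 ?measure_ge0.
Qed.

Lemma mul_ge K A : compact K -> K !=set0 -> compact A ->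
  (m A <= m (setmul mul K A))%E.
Proof.
move=> cK [k Kk] cA; case: hm => hinv _ _ _ _.
rewrite -(hinv k A (compact_meas haus cA)).
apply: le_measure; rewrite ?inE.
- apply: compact_meas haus _; have -> : mul k @` A = setmul mul [set k] A.
    by apply/seteqP; split => x; [case=> a Aa <-; exists k => //; exists a|case=> _ -> [a Aa <-]; exists a].
  exact: setmul_compact cmul (@compact_set1 _ k) cA.
- exact: compact_meas haus (setmul_compact cmul cK cA).
- by move=> _ [a Aa <-]; exists k => //; exists a.
Qed.

Lemma F_sq K : compact K -> K !=set0 -> (F K * F K <= F (setmul mul K K))%E.
Proof.
move=> cK K0; apply: le_ereal_inf_tmp => _ [A [cA mA0] <-].
set B := setmul mul K A.
have cB : compact B by exact: setmul_compact.
have mAB := mul_ge cK K0 cA.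
have mB0 : (0 < m B)%E by apply: lt_le_trans mAB.
have cKB : compact (setmul mul K B) by exact: setmul_compact.
rewrite setmulA -/B.
have fA := fin_compact cA; have fB := fin_compact cB; have fKB := fin_compact cKB.
have ->: (m (setmul mul K B) * ((fine (m A))^-1)%:E =
   (m (setmul mul K B) * ((fine (m B))^-1)%:E) * (m B * ((fine (m A))^-1)%:E))%E.
  rewrite -(fineK fA) -(fineK fB) -(fineK fKB) /= -!EFinM; congr EFin.
  have : (0 < fine (m B))%R by rewrite fine_gt0 // mB0 /= ltey_eq fB.
  by move=> hb; rewrite mulrA divfK // gt_eqF.
apply: lee_pmul; try exact: F_ge0.
- by apply: ereal_inf_lbound; exists B.
- by apply: ereal_inf_lbound; exists A.
Qed.
End Main.

Theorem lemma3p1 (R : realType) (G : ptopologicalType)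
    (mul : G -> G -> G) (inv : G -> G) (one : G)
    (m : {measure set (borelT G) -> \bar R}) :
  lc_group mul inv one -> left_haar mul m ->
  Iconst mul m = 1%:E \/ Iconst mul m = +oo%E.
Proof.
move=> hG hm.
have haus : hausdorff_space G by case: hG => _ _ _ _ [].
have cmul : continuous (fun p : G * G => mul p.1 p.2) by case: hG => _ _ _ [].
have s1 : (1 <= Iconst mul m)%E.
  apply: le_trans (ereal_sup_ubound _); last first.
    by exists [set one]; first by split; [exact: compact_set1|exists one].
  apply: le_ereal_inf_tmp => _ [A [cA mA0] <-].
  have -> : setmul mul [set one] A = A.
    case: hG => _ h1 _ _ _.
    apply/seteqP; split => x; first by case=> _ -> [a Aa <-]; rewrite (h1 a).1.
    by move=> Ax; exists one => //; exists x => //; rewrite (h1 x).1.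
  have fA := fin_compact hm cA.
  by rewrite -(fineK fA) -EFinM mulfV // gt_eqF // fine_gt0 // mA0 /= ltey_eq fA.
have sq : forall K, compact K -> K !=set0 ->
   let FK := ereal_inf [set (m (setmul mul K A) * ((fine (m A))^-1)%:E)%E
                   | A in [set A : set G | compact A /\ (0 < m A)%E]] in
   (FK * FK <= Iconst mul m)%E.
  move=> K cK K0 /=; apply: le_trans (F_sq hG hm cK K0) _.
  apply: ereal_sup_ubound; exists (setmul mul K K) => //; split.
    exact: setmul_compact.
  by case: K0 => k Kk; exists (mul k k); exists k => //; exists k.
move: s1 sq; case E : (Iconst mul m) => [r| |] s1 sq; last 2 first.
- by right.
- by [].
have r1 : (1 <= r)%R by rewrite -lee_fin.
have [->|rn1] := eqVneq r 1%R; first by left.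
have r1' : (1 < r)%R by rewrite lt_neqAle eq_sym rn1 r1.
exfalso.
have : (((r + 1) / 2)%:E < Iconst mul m)%E by rewrite E lte_fin; lra.
move/ereal_sup_gt => [_ [K [cK K0] <-]].
move: (sq K cK K0) (F_ge0 mul m K) => /=.
set FK := ereal_inf _.
case: FK => [y| |] hy hy0 ht //.
rewrite -EFinM lee_fin in hy; rewrite lte_fin in ht; clear hy0 E s1 sq; nra.
Qed.
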